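(* Let $\mathcal{X}$ be a finite source alphabet and $\mathcal{Y}$ a finite reproduction alphabet with $|\mathcal{X}|\geq 2$ and $|\mathcal{Y}|\geq 2$, and let $d:\mathcal{X}\times\mathcal{Y}\to\mathbb{R}_{\geq0}$ be a normal distortion measure. Assume there exists at least one source distribution $P_X$ on $\mathcal{X}$ such that the rate distortion function $R(D)$ is not identically zero. Then there exist two distinct source letters $k_1,k_2\in\mathcal{X}$ and two distinct reproduction letters $l_1,l_2\in\mathcal{Y}$ such that $d(k_1,l_1)=0$, $d(k_1,l_2)>0$, $d(k_2,l_2)=0$ and $d(k_2,l_1)>0$.
   Context: A distortion measure $d:\mathcal{X}\times\mathcal{Y}\to\mathbb{R}_{\geq 0}$ is normal if for every $x\in\mathcal{X}$ there is $y\in\mathcal{Y}$ with $d(x,y)=0$. For a source distribution $P_X$ and distortion level $D\geq 0$, the rate distortion function is $R(D)=\inf\{I(X;Y): P_{Y|X},\ \sum_{x,y}P_X(x)P_{Y|X}(y|x)d(x,y)\leq D\}$, the infimum over all transition matrices $P_{Y|X}$, with $I(X;Y)$ the mutual information of $P_XP_{Y|X}$. *)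

(* Defs.v *)
From mathcomp Require Import all_boot all_order all_algebra.
From mathcomp Require Import classical_sets reals exp.
Set Implicit Arguments. Unset Strict Implicit. Unset Printing Implicit Defensive.
Import Order.TTheory GRing.Theory Num.Theory.
Local Open Scope ring_scope.
Local Open Scope classical_set_scope.

Section RD.
Context {R : realType} {X Y : finType}.

Definition is_dist (P : X -> R) : Prop :=
  (forall x, 0 <= P x) /\ \sum_(x : X) P x = 1.

Definition is_channel (W : X -> Y -> R) : Prop :=
  (forall x y, 0 <= W x y) /\ (forall x, \sum_(y : Y) W x y = 1).

Definition out_dist (P : X -> R) (W : X -> Y -> R) (y : Y) : R :=
  \sum_(x : X) P x * W x y.

Definition mutual_info (P : X -> R) (W : X -> Y -> R) : R :=
  \sum_(x : X) \sum_(y : Y)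
    (if P x * W x y == 0 then 0
     else P x * W x y * ln (W x y / out_dist P W y)).

Definition exp_distortion (P : X -> R) (W : X -> Y -> R) (d : X -> Y -> R) : R :=
  \sum_(x : X) \sum_(y : Y) P x * W x y * d x y.

Definition rate_distortion (P : X -> R) (d : X -> Y -> R) (D : R) : R :=
  inf [set mutual_info P W | W in [set W | is_channel W /\ exp_distortion P W d <= D]].

Definition normal_distortion (d : X -> Y -> R) : Prop :=
  (forall x y, 0 <= d x y) /\ (forall x, exists y, d x y = 0).

End RD.

(* Main.v *)
Require Import Defs.
From mathcomp Require Import all_boot all_order all_algebra.
From mathcomp Require Import classical_sets reals exp.
From mathcomp Require Import boolp.
Import Order.TTheory GRing.Theory Num.Theory.
Local Open Scope ring_scope.

Lemma ln_le_sub1 {R : realType} (t : R) : 0 < t -> ln t <= t - 1.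
Proof.
move=> t0; have h : ln (1 + (t - 1)) <= t - 1.
  by apply: le_ln1Dx; rewrite ltrBrDl subrr.
by rewrite addrCA subrr addr0 in h.
Qed.

Lemma mi_ge0 (R : realType) (X Y : finType) (P : X -> R) (W : X -> Y -> R) :
  is_dist P -> is_channel W -> 0 <= mutual_info P W.
Proof.
move=> [P0 P1] [W0 W1].
have key : forall x y, P x * W x y - P x * out_dist P W y <=
   (if P x * W x y == 0 then 0
     else P x * W x y * ln (W x y / out_dist P W y)).
  move=> x y; have [/eqP E|NE] := ifPn.
    by rewrite E sub0r oppr_le0 mulr_ge0 // sumr_ge0 // => i _; rewrite mulr_ge0.
  have PW0 : 0 < P x * W x y by rewrite lt_def NE mulr_ge0.
  have Px0 : 0 < P x by rewrite lt_def; apply/andP; split => //;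
     apply: contraNneq NE => ->; rewrite mul0r.
  have Wx0 : 0 < W x y by rewrite lt_def; apply/andP; split => //;
     apply: contraNneq NE => ->; rewrite mulr0.
  have q0 : P x * W x y <= out_dist P W y.
    rewrite /out_dist (bigD1 x) //= lerDl sumr_ge0 // => i _; rewrite mulr_ge0 //.
  have qp : 0 < out_dist P W y by apply: lt_le_trans q0.
  have h := @ln_le_sub1 _ _ (divr_gt0 qp Wx0).
  have -> : W x y / out_dist P W y = (out_dist P W y / W x y)^-1 by rewrite invf_div.
  rewrite lnV ?posrE ?divr_gt0 //.
  have : P x * W x y * (1 - out_dist P W y / W x y) <= P x * W x y * - ln (out_dist P W y / W x y).
    by rewrite ler_pM2l // lerNr opprB.
  by apply: le_trans; rewrite mulrBr mulr1 -(mulrA (P x)) (mulrCA (W x y)) divff ?gt_eqF // mulr1.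
apply: (@le_trans _ _ (\sum_x \sum_y (P x * W x y - P x * out_dist P W y))); last first.
  by apply: ler_sum => x _; apply: ler_sum => y _; apply: key.
have sq : \sum_y out_dist P W y = 1.
  rewrite /out_dist exchange_big /= -P1; apply: eq_bigr => x _.
  by rewrite -mulr_sumr W1 mulr1.
rewrite le_eqVlt; apply/orP; left; apply/eqP.
rewrite (eq_bigr (fun x => 0)) ?big1_eq // => x _.
by rewrite sumrB -!mulr_sumr W1 sq mulr1 subrr.
Qed.

Lemma mi_const (R : realType) (X Y : finType) (P : X -> R) (y0 : Y) :
  is_dist P -> mutual_info P (fun x y => (y == y0)%:R) = 0.
Proof.
move=> [P0 P1]; rewrite /mutual_info big1 // => x _; rewrite big1 // => y _.
case: (eqVneq y y0) => [->|ne]; last by rewrite mulr0 eqxx.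
rewrite mulr1 /out_dist; under eq_bigr do rewrite eqxx mulr1.
by rewrite P1 divr1 ln1 mulr0 if_same.
Qed.

Lemma common_zero (R : realType) (X Y : finType) (d : X -> Y -> R) :
  normal_distortion d ->
  ~ (exists (k1 k2 : X) (l1 l2 : Y),
    k1 != k2 /\ l1 != l2 /\
    d k1 l1 = 0 /\ 0 < d k1 l2 /\ d k2 l2 = 0 /\ 0 < d k2 l1) ->
  (X -> exists y0, forall x, d x y0 = 0).
Proof.
move=> [d0 dz] nE xi.
pose Z x := [set y | d x y == 0].
case: (@arg_minnP X xi xpredT (fun x => #|Z x|) isT) => x1 _ x1min.
have [y0 /eqP hy0] := dz x1.
exists y0 => x; apply/eqP; apply/negPn/negP => hx.
case: (boolP (Z x \subset Z x1)) => sub.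
  have eqZ : Z x = Z x1.
    by apply/eqP; rewrite -(subset_leqif_cards sub) eqn_leq (subset_leq_card sub) (x1min x isT).
  have : y0 \in Z x by rewrite eqZ inE hy0.
  by rewrite inE (negbTE hx).
move/subsetPn: sub => [y2 y2x y2n].
apply: nE; exists x1, x, y0, y2; rewrite !inE in y2x y2n.
split; first by apply: contraNneq hx => <-; rewrite hy0.
split; first by apply: contraNneq y2n => <-; rewrite hy0.
split; first by apply/eqP; rewrite hy0.
split; first by rewrite lt_def y2n d0.
split; first by apply/eqP.
by rewrite lt_def hx d0.
Qed.

Theorem mainTheorem8 (R : realType) (X Y : finType)
  (hX : (2 <= #|X|)%N) (hY : (2 <= #|Y|)%N)
  (d : X -> Y -> R) (hd : normal_distortion d)
  (hRD : exists P : X -> R, is_dist P /\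
           ~ (forall D : R, 0 <= D -> rate_distortion P d D = 0)) :
  exists (k1 k2 : X) (l1 l2 : Y),
    k1 != k2 /\ l1 != l2 /\
    d k1 l1 = 0 /\ 0 < d k1 l2 /\ d k2 l2 = 0 /\ 0 < d k2 l1.
Proof.
have [//|nE] := pselect (exists (k1 k2 : X) (l1 l2 : Y),
    k1 != k2 /\ l1 != l2 /\
    d k1 l1 = 0 /\ 0 < d k1 l2 /\ d k2 l2 = 0 /\ 0 < d k2 l1).
exfalso; case: hRD => P [hP]; apply => D D0.
have : (0 < #|X|)%N by apply: leq_trans hX.
case/card_gt0P => xi _.
have [y0 hy0] := @common_zero _ _ _ d hd nE xi.
rewrite /rate_distortion; set S := (X in inf X).
have S0 : S 0.
  exists (fun x y => (y == y0)%:R); last exact: mi_const.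
  split; first split.
  - by move=> x y; rewrite ler0n.
  - move=> x; rewrite (bigD1 y0) //= eqxx big1 ?addr0 // => y /negbTE ->//.
  rewrite /exp_distortion big1 ?D0 // => x _; rewrite big1 // => y _.
  by case: (eqVneq y y0) => [->|_]; rewrite ?hy0 ?mulr0 ?mul0r.
have lb : lbound S 0 by move=> _ [W [hW _] <-]; exact: mi_ge0.
apply/eqP; rewrite eq_le; apply/andP; split.
  exact: (ge_inf (ex_intro _ 0 lb)).
exact: (lb_le_inf (ex_intro _ 0 S0)).
Qed.
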